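(* If a collection $\mathcal Q$ of probability measures on $\{0,1\}^{\mathbb N}$ is non-separable in its means, then there exists $\gamma>0$ such that $\mathrm{Mean}(\mathcal Q)$ is infinitely sequentially $\gamma$-fat-shattered.
   Context: For a probability measure $\mu$ on $\{0,1\}^{\mathbb N}$, $\mathrm{Mean}(\mu)\in[0,1]^{\mathbb N}$ is the vector whose $j$-th coordinate is $\mathbb E[X_j]$ for $X\sim\mu$; $\mathrm{Mean}(\mathcal Q)=\{\mathrm{Mean}(\mu):\mu\in\mathcal Q\}$. A countable $\varepsilon$-cover of $\mathrm{Mean}(\mathcal Q)$ is a countable set $C\subset[0,1]^{\mathbb N}$ such that every $q\in\mathrm{Mean}(\mathcal Q)$ has some $p\in C$ with $\|q-p\|_\infty<\varepsilon$; $\mathcal Q$ is non-separable in its means if for some $\varepsilon>0$ no countable $\varepsilon$-cover exists. For $M\subseteq[0,1]^{\mathbb N}$, $\gamma>0$ and $d\in\mathbb N$, a $\gamma$-shattered tree of depth $d$ for $M$ is an assignment, to each node $v$ of the complete binary tree of depth $d$ (nodes identified with binary strings of length $0,1,\dots,d-1$), of a coordinate $i_v\in\mathbb N$ and a value $r_v\in(0,1)$, such that for every binary string $(b_1,\dots,b_d)$ there exists $q\in M$ with, for each $k=1,\dots,d$ and $v=(b_1,\dots,b_{k-1})$: $q_{i_v}\le r_v-\gamma$ if $b_k=0$ and $q_{i_v}\ge r_v+\gamma$ if $b_k=1$. $M$ is infinitely sequentially $\gamma$-fat-shattered if for every $d\in\mathbb N$ there is a $\gamma$-shattered tree of depth $d$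 for $M$. *)

(* Defs.v *)
From HB Require Import structures.
From mathcomp Require Import all_boot all_order all_algebra.
From mathcomp Require Import all_classical all_reals all_analysis.
Set Implicit Arguments. Unset Strict Implicit. Unset Printing Implicit Defensive.
Import Order.TTheory GRing.Theory Num.Theory.
Local Open Scope classical_set_scope.
Local Open Scope ring_scope.

(* The Cantor space {0,1}^N, points x : nat -> bool (true = 1). *)
Definition cylinders : set (set (nat -> bool)) :=
  [set A | exists j b, A = [set x | x j = b]].

Definition cantor_mspace := g_sigma_algebraType cylinders.

Definition Mean {R : realType} (mu : probability cantor_mspace R)
  : nat -> R :=
  fun j => fine (\int[mu]_(x in [set: cantor_mspace]) ((x j)%:R)%:E)%E.

Definition MeanSet {R : realType} (Q : set (probability cantor_mspace R))
  : set (nat -> R) := Mean @` Q.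

Definition unit_cube {R : realType} : set (nat -> R) :=
  [set p | forall j, 0 <= p j <= 1].

(* ||q - p||_oo < eps, with ||.||_oo the supremum over coordinates *)
Definition sup_dist_lt {R : realType} (q p : nat -> R) (eps : R) : Prop :=
  exists2 b, b < eps & forall j, `|q j - p j| <= b.

Definition countable_cover {R : realType} (M : set (nat -> R)) (eps : R)
    (C : set (nat -> R)) : Prop :=
  [/\ countable C, C `<=` unit_cube &
      forall q, M q -> exists2 p, C p & sup_dist_lt q p eps].

Definition non_separable_in_means {R : realType}
    (Q : set (probability cantor_mspace R)) : Prop :=
  exists2 eps : R, 0 < eps &
    ~ exists C, countable_cover (MeanSet Q) eps C.

(* A gamma-shattered tree of depth d: nodes are binary strings v with
   size v < d; labels i v (a coordinate) and r v in (0,1). *)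
Definition shattered_tree {R : realType} (M : set (nat -> R)) (gamma : R)
    (d : nat) (i : seq bool -> nat) (r : seq bool -> R) : Prop :=
  (forall v : seq bool, (size v < d)%N -> 0 < r v < 1) /\
  forall bs : seq bool, size bs = d ->
    exists2 q, M q &
      forall k : nat, (k < d)%N ->
        let v := take k bs in
        if nth false bs k then r v + gamma <= q (i v)
        else q (i v) <= r v - gamma.

Definition inf_seq_fat_shattered {R : realType} (M : set (nat -> R))
    (gamma : R) : Prop :=
  forall d : nat, exists i r, shattered_tree M gamma d i r.

(* Main.v *)
Require Import Defs.
From HB Require Import structures.
From mathcomp Require Import all_boot all_order all_algebra.
From mathcomp Require Import all_classical all_reals all_analysis.
From mathcomp Require Import lra.
Import Order.TTheory GRing.Theory Num.Theory.
Local Open Scope classical_set_scope.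
Local Open Scope ring_scope.
Lemma mean_cube (R : realType) (mu : probability cantor_mspace R) :
  unit_cube (Mean mu).
Proof.
move=> j.
pose A : set cantor_mspace := [set x | x j = true].
have mA : measurable A.
  apply: sub_sigma_algebra; by exists j, true.
have -> : Mean mu j = fine (mu A).
  rewrite /Mean.
  have -> : (\int[mu]_(x in [set: cantor_mspace]) ((x j)%:R)%:E)%E
          = (\int[mu]_(x in [set: cantor_mspace]) (\1_A x)%:E)%E.
    apply: eq_integral => x _; rewrite indicE; case E: (x j).
      by rewrite mem_set.
    have nA : ~ A x by rewrite /A /= E. by rewrite memNset.
  by rewrite integral_indic // setIT.
have h0 : (0 <= mu A)%E := measure_ge0 mu A.
have h1 : (mu A <= 1)%E := probability_le1 mu mA.
move: h0 h1; case: (mu A) => [r| |] //= h0 h1.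
  by apply/andP; split; rewrite -lee_fin.
Qed.

Definition cov {R : realType} (eps : R) (S : set (nat -> R)) : Prop :=
  exists C : set (nat -> R), countable C /\
    forall q, S q -> exists2 p, C p & sup_dist_lt q p eps.

Lemma cov_sub {R : realType} {eps : R} {S T} : S `<=` T -> cov eps T -> cov eps S.
Proof. by move=> ST [C [cC hC]]; exists C; split => // q /ST /hC. Qed.

Lemma cov0 {R : realType} (eps : R) : cov eps set0.
Proof. by exists set0; split => //; exact: countable0. Qed.

Lemma cov_bigcup {R : realType} (eps : R) (F : nat -> set (nat -> R)) :
  (forall n, cov eps (F n)) -> cov eps (\bigcup_n F n).
Proof.
move=> hF; have [G hG] := choice hF.
exists (\bigcup_n G n); split.
  apply: bigcup_countable; first exact: countableP.
  by move=> n _; case: (hG n).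
move=> q [n _ Fq]; have [_ h] := hG n; have [p Gp hp] := h q Fq.
by exists p => //; exists n.
Qed.

Lemma cov_U {R : realType} (eps : R) S T : cov eps S -> cov eps T -> cov eps (S `|` T).
Proof.
move=> hS hT.
apply: (@cov_sub _ _ _ (\bigcup_n (if n is 0 then S else T))).
  move=> q [Sq|Tq]; [by exists 0%N | by exists 1%N].
by apply: cov_bigcup => -[|n].
Qed.

Lemma cov1 {R : realType} (eps : R) (c : nat -> R) S :
  (forall q, S q -> sup_dist_lt q c eps) -> cov eps S.
Proof.
move=> h; exists [set c]; split; first exact: countable1.
by move=> q /h; exists c.
Qed.

Definition clamp {R : realType} (x : R) : R :=
  if x < 0 then 0 else if 1 < x then 1 else x.

Lemma clampP {R : realType} {q : R} (x : R) : 0 <= q <= 1 ->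
  `|q - clamp x| <= `|q - x| /\ 0 <= clamp x <= 1.
Proof.
move=> /andP[q0 q1]; rewrite /clamp.
case: ifP => h1; last case: ifP => h2.
- have hx : x < 0 by rewrite h1.
  rewrite subr0 !ger0_norm //; [split; lra| lra].
- have hx : 1 < x by rewrite h2.
  rewrite !ler0_norm; [split; lra | lra | lra].
- split => //; move/negbT: h1; move/negbT: h2; rewrite -!leNgt => *; lra.
Qed.

Lemma nonsep_cov (R : realType) (Q : set (probability cantor_mspace R)) eps :
  ~ (exists C, countable_cover (MeanSet Q) eps C) -> ~ cov eps (MeanSet Q).
Proof.
move=> nC [C [cC hC]]; apply: nC.
exists ((fun p j => clamp (p j)) @` C); split.
- exact: sub_countable (card_image_le _ _) cC.
- move=> _ [p _ <-] j.
  have h : 0 <= (0:R) <= 1 by apply/andP; split; lra.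
  by have [_ ] := clampP (p j) h.
- move=> q [mu Qmu <-]; have [p Cp [b bl hb]] := hC _ (ex_intro2 _ _ mu Qmu erefl).
  exists (fun j => clamp (p j)); first by exists p.
  exists b => // j; have [h _] := clampP (p j) (@mean_cube R mu j).
  exact: le_trans h (hb j).
Qed.

Definition half {R : realType} (S : set (nat -> R)) (g : R) (i : nat) (r : R) (b : bool) :
  set (nat -> R) :=
  [set q | S q /\ (if b then r + g <= q i else q i <= r - g)].

Lemma split_lemma {R : realType} {eps g : R} {S : set (nat -> R)} :
  0 < g -> 3 * g < 2 * eps -> S `<=` unit_cube -> ~ cov eps S ->
  exists i r, ~ cov eps (half S g i r false) /\ ~ cov eps (half S g i r true).
Proof.
move=> g0 ge Scube nS.
case: (pselect (exists i r, ~ cov eps (half S g i r false) /\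
                           ~ cov eps (half S g i r true))) => // H.
exfalso; apply: (nS).
have H' : forall i r, ~ cov eps (half S g i r false) -> cov eps (half S g i r true).
  move=> i r h; case: (pselect (cov eps (half S g i r true))) => // hn.
  by exfalso; apply: H; exists i, r.
pose A i k := [set q : nat -> R | S q /\ q i <= k%:R * g].
have hk : forall i, exists k, ~ cov eps (A i k) /\ forall k', (k' < k)%N -> cov eps (A i k').
  move=> i.
  pose N := Num.Def.archi_bound (g^-1).
  have hN : g^-1 < N%:R by apply: archi_boundP; rewrite invr_ge0 ltW.
  have hN1 : 1 <= N%:R * g.
    have gg : g^-1 * g = 1 by rewrite mulVf // gt_eqF.
    nra.
  have exP : exists k, (fun k => `[< ~ cov eps (A i k) >]) k.
    exists N; apply/asboolP => hc; apply: nS; apply: cov_sub hc.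
    move=> q Sq; split => //; have /andP[_ q1] := Scube q Sq i; lra.
  case: (ex_minnP exP) => k /asboolP hk hmin.
  exists k; split => // k' hk'.
  case: (pselect (cov eps (A i k'))) => // hn.
  have := hmin k' (asboolT hn); rewrite leqNgt hk' //.
have [K hK] := choice hk.
pose D i := [set q : nat -> R | S q /\ q i <= (K i)%:R * g - g].
pose U i := [set q : nat -> R | S q /\ (K i)%:R * g + 2 * g <= q i].
pose Res := [set q : nat -> R | S q /\ forall i,
   (K i)%:R * g - g < q i < (K i)%:R * g + 2 * g].
apply: (@cov_sub _ _ _ ((\bigcup_i D i `|` \bigcup_i U i) `|` Res)).
  move=> q Sq.
  case: (pselect (exists i, q i <= (K i)%:R * g - g)) => [[i hi]|h1].
    by left; left; exists i.
  case: (pselect (exists i, (K i)%:R * g + 2 * g <= q i)) => [[i hi]|h2].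
    by left; right; exists i.
  right; split => // i; apply/andP; split; rewrite ltNge; apply/negP => hi.
    by apply: h1; exists i.
  by apply: h2; exists i.
apply: cov_U; first apply: cov_U.
- apply: cov_bigcup => i.
  have [_ hmin] := hK i.
  case E: (K i) => [|k].
    apply: (cov_sub _ (cov0 eps)) => q [Sq hq].
    have /andP[q0 _] := Scube q Sq i; move: hq; rewrite E /=; lra.
  apply: cov_sub (hmin k _); last by rewrite E.
  move=> q [Sq hq]; split => //; move: hq; rewrite E -addn1 natrD; lra.
- apply: cov_bigcup => i.
  have [hn _] := hK i.
  have := H' i ((K i)%:R * g + g).
  move=> h; apply: (cov_sub _ (h _)).
    move=> q [Sq hq]; split => //=; lra.
  move=> hc; apply: hn; apply: cov_sub hc => q [Sq hq]; split => //=; lra.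
- apply: (@cov1 _ eps (fun i => (K i)%:R * g + g / 2)) => q [Sq hq].
  exists (3 * g / 2); first lra.
  move=> i; have /andP[h1 h2] := hq i; rewrite ler_norml; apply/andP; split; lra.
Qed.

Lemma ncov_nonempty {R : realType} {eps : R} {S} : ~ cov eps S -> exists q, S q.
Proof.
move=> h; case: (pselect (exists q, S q)) => // hn; exfalso; apply: h.
apply: cov_sub (cov0 eps) => q Sq; apply: hn; by exists q.
Qed.

Lemma tree_lemma (R : realType) (eps g : R) (d : nat) :
  0 < g -> 3 * g < 2 * eps -> forall S : set (nat -> R),
  S `<=` unit_cube -> ~ cov eps S -> exists i r, shattered_tree S g d i r.
Proof.
move=> g0 ge; elim: d => [|d IH] S Scube nS.
  have [q0 Sq0] := ncov_nonempty nS.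
  exists (fun _ => 0%N), (fun _ => 1 / 2); split => // bs _.
  by exists q0.
have [i0 [r0 [nf nt]]] := split_lemma g0 ge Scube nS.
have sub b : half S g i0 r0 b `<=` S by move=> q [].
have [if_ [rf [trf1 trf2]]] := IH _ (subset_trans (sub false) Scube) nf.
have [it [rt [trt1 trt2]]] := IH _ (subset_trans (sub true) Scube) nt.
have [q0 [S0 h0]] := ncov_nonempty nf.
have [q1 [S1 h1]] := ncov_nonempty nt.
exists (fun v => if v is b :: v' then (if b then it v' else if_ v') else i0).
exists (fun v => if v is b :: v' then (if b then rt v' else rf v') else r0).
split.
  case => [|b v] /= hv.
    have /andP[a0 _] := Scube q0 S0 i0; have /andP[_ a1] := Scube q1 S1 i0.
    apply/andP; split; lra.
  by case: b; [apply: trt1 | apply: trf1].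
case => [|b bs] //= [hs].
case: b.
- have [q [Sq hq] hk] := trt2 bs hs.
  exists q => //.
  by case => [|k] //= hk'; apply: hk.
- have [q [Sq hq] hk] := trf2 bs hs.
  exists q => //.
  by case => [|k] //= hk'; apply: hk.
Qed.

Theorem mainTheorem12 (R : realType) (Q : set (probability cantor_mspace R)) :
  non_separable_in_means Q ->
  exists2 gamma : R, 0 < gamma & inf_seq_fat_shattered (MeanSet Q) gamma.
Proof.
move=> [eps eps0 nC].
have nS := @nonsep_cov R Q eps nC.
have g0 : 0 < eps / 2 by lra.
have ge : 3 * (eps / 2) < 2 * eps by lra.
have Mcube : MeanSet Q `<=` unit_cube by move=> _ [mu _ <-]; exact: mean_cube.
exists (eps / 2) => // d.
exact: (@tree_lemma R eps (eps / 2) d g0 ge _ Mcube nS).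
Qed.
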